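(* Let $k$ be an algebraically closed field of characteristic $p>0$. Let $e_1\ge e_2$ be positive integers with $e=e_1+e_2$, $p\nmid(e-1)(e_1-1)(e_2-1)$, and let $pw$ be the smallest multiple of $p$ that is $\ge e_1$. Suppose $\lfloor\frac{e-1}{p}\rfloor>\lfloor\frac{e_1-1}{p}\rfloor+\lfloor\frac{e_2-1}{p}\rfloor$. Then there exists a rational function $G(x,t)\in\operatorname{Frac}(k[x,t])$ whose partial fraction decomposition in $k(t)(x)$ has the form $$G(x,t)=\sum_{i=1}^{e_1-1}\frac{a_i}{x^i}+\frac{a_{pw}}{x^{pw}}+\sum_{j=1}^{e_2-1}\frac{b_j}{(x-t)^j}$$ with all $a_i,b_j\in k(t)$ and $a_{pw},a_{e_1-1},b_{e_2-1}\neq0$, such that $G(x,0)\in\operatorname{Frac}(k[x])$ has exactly one pole, of order $e-1$, at $x=0$. *)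

(* Defs.v *)
From HB Require Import structures.
From mathcomp Require Import all_boot all_order all_algebra all_field.
From mathcomp Require Import fraction.
Set Implicit Arguments. Unset Strict Implicit. Unset Printing Implicit Defensive.
Import Order.TTheory GRing.Theory Num.Theory.
Local Open Scope ring_scope.
Notation "x %:F" := (@FracField.tofrac _ x) : ring_scope.

Definition kt (k : fieldType) := {fraction {poly k}}.
(* k(t)(x) = Frac(k[x,t]) : rational functions in x over k(t) *)
Definition kxt (k : fieldType) := {fraction {poly (kt k)}}.
Definition kx (k : fieldType) := {fraction {poly k}}.

Definition tvar (k : fieldType) : kt k := ('X : {poly k})%:F.
Definition xvar (k : fieldType) : kxt k := ('X : {poly (kt k)})%:F.
Definition cst (k : fieldType) (a : kt k) : kxt k := (a%:P)%:F.

(* k[t][x] = k[x,t] : outer variable x, coefficients in k[t] *)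
Definition embxt (k : fieldType) (P : {poly {poly k}}) : kxt k :=
  (map_poly (fun c : {poly k} => (c%:F : kt k)) P)%:F.

Definition spec0 (k : fieldType) (P : {poly {poly k}}) : {poly k} :=
  map_poly (fun c : {poly k} => c.[0]) P.

(* G(x,0) is defined and equals h: G = P/Q with P, Q in k[x,t], Q(x,0) <> 0,
   and h = P(x,0)/Q(x,0).  (Standard specialization; independent of choice.) *)
Definition specializes_to (k : fieldType) (G : kxt k) (h : kx k) : Prop :=
  exists P Q : {poly {poly k}},
    [/\ spec0 Q != 0, G * embxt Q = embxt P &
        h * ((spec0 Q)%:F : kx k) = ((spec0 P)%:F : kx k)].

Definition Gform (k : fieldType) (e1 e2 pw : nat) (a : nat -> kt k) (apw : kt k)
    (b : nat -> kt k) : kxt k :=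
  \sum_(1 <= i < e1) cst (a i) / xvar k ^+ i
  + cst apw / xvar k ^+ pw
  + \sum_(1 <= j < e2) cst (b j) / (xvar k - cst (tvar k)) ^+ j.

(* Main.v *)
Require Import Defs.
From HB Require Import structures.
From mathcomp Require Import all_boot all_order all_algebra all_field.
From mathcomp Require Import fraction.
From mathcomp Require Import zify ring.
Import Order.TTheory GRing.Theory Num.Theory.
Local Open Scope ring_scope.
Section PolyPart.
Variable k : fieldType.
Local Notation L := ((1 - 'X) : {poly k}).

Lemma geo pw : L * \sum_(s < pw) 'X^s = 1 - 'X^pw.
Proof.
have := subrX1 ('X : {poly k}) pw.
move=> H; have -> : L = -('X - 1) by rewrite opprB.
by rewrite mulNr -H opprB.
Qed.

Lemma pow1X pw n : exists F : {poly k}, (1 - 'X^pw)^+n = 1 + 'X^pw * F.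
Proof.
elim: n => [|n [F HF]]; first by exists 0; rewrite expr0 mulr0 addr0.
exists (F - 1 - 'X^pw * F); rewrite exprS HF; ring.
Qed.

Lemma coef0_exp (p : {poly k}) n : (p ^+ n)`_0 = p`_0 ^+ n.
Proof.
elim: n => [|n IH]; first by rewrite !expr0 coef1.
by rewrite !exprS coef0M IH.
Qed.

Lemma geo0 pw : (0 < pw)%N -> (\sum_(s < pw) ('X^s : {poly k}))`_0 = 1.
Proof.
case: pw => // pw _; rewrite coef_sum big_ord_recl /= coefXn /=.
rewrite big1 ?addr0 // => i _; by rewrite coefXn.
Qed.

Lemma sizeL : (size L <= 2)%N.
Proof.
apply: leq_trans (size_polyD _ _) _.
by rewrite size_polyN size_polyX size_poly1.
Qed.

Lemma sizeLn n : (size (L ^+ n) <= n.+1)%N.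
Proof.
apply: leq_trans (size_poly_exp_leq _ _) _.
rewrite ltnS; have := sizeL.
case: (size L) => [|[|[|s]]] //= _; by rewrite ?mul0n ?mul1n.
Qed.

Lemma UV_exists n q m : (0 < n)%N -> (0 < m)%N ->
  exists U V : {poly k},
  [/\ take_poly q.+1 (L^+n) = U * L^+n + 'X^((m+q).+1) * V,
      (size U <= (m+q).+1)%N, (size V <= n)%N,
      U`_0 = 1 & (forall l, (0 < l <= q)%N -> U`_l = 0) /\ U`_q.+1 = - (L^+n)`_q.+1 ].
Proof.
move=> n0 m0.
set pw := (m+q).+1. set N := take_poly q.+1 (L^+n).
set I := (\sum_(s < pw) ('X^s : {poly k}))^+n.
have LI : L^+n * I = (1 - 'X^pw)^+n by rewrite -exprMn geo.
have [F HF] := pow1X pw n.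
set U := take_poly pw (N * I).
set Dr := drop_poly pw (N * I).
have HNI : N * I = U + Dr * 'X^pw by rewrite poly_take_drop.
have E1 : N - U * L^+n = 'X^pw * (Dr * L^+n - N * F).
  have -> : U = N * I - Dr * 'X^pw by rewrite HNI addrK.
  rewrite mulrBl -mulrA [I * _]mulrC LI HF; ring.
set V := drop_poly pw (N - U * L^+n).
have HV : N - U * L^+n = 'X^pw * V.
  by rewrite /V E1 [X in drop_poly _ X]mulrC drop_polyMXn_id.
set D := drop_poly q.+1 (L^+n).
have HN : N = L^+n - D * 'X^(q.+1) by rewrite /N /D -{2}(poly_take_drop q.+1 (L^+n)) addrK.
have HNI2 : N * I = 1 + 'X^pw * F - 'X^(q.+1) * (D * I).
  by rewrite HN mulrBl LI HF; ring.
have cU l : (l < pw)%N -> U`_l = (l == 0)%:R - (if (l < q.+1)%N then 0 else (D * I)`_(l - q.+1)).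
  move=> lpw; rewrite /U coef_take_poly lpw HNI2 coefB coefD coef1 coefXnM lpw addr0.
  by rewrite coefXnM.
exists U, V; split.
- by rewrite -/N -[LHS](subrK (U * L^+n)) HV addrC.
- exact: size_take_poly.
- rewrite /V size_drop_poly.
  have s1 : (size N <= pw + n)%N.
    apply: leq_trans (size_take_poly _ _) _; rewrite /pw; lia.
  have s2 : (size (U * L^+n)%R <= pw + n)%N.
    apply: leq_trans (size_polyMleq _ _) _.
    have := size_take_poly pw (N * I); have := sizeLn n; rewrite -/U; lia.
  have s3 : (size (N - U * L^+n)%R <= pw + n)%N.
    apply: leq_trans (size_polyD _ _) _; rewrite size_polyN geq_max s1 s2 //.
  lia.
- by rewrite cU // subr0.
split.
- move=> l /andP[l0 lq]; rewrite cU; last by rewrite /pw; lia.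
  have -> : (l < q.+1)%N by lia.
  by rewrite subr0; case: l l0 {lq}.
rewrite cU; last by rewrite /pw; lia.
rewrite ltnn subnn sub0r coef0M /I coef0_exp geo0 ?expr1n ?mulr1 /pw //.
by rewrite coef_drop_poly add0n.
Qed.

Lemma revsum (R : nmodType) (F : nat -> R) a m :
  \sum_(a <= i < a + m) F i = \sum_(1 <= j < m.+1) F (a + m - j)%N.
Proof.
rewrite big_nat_rev.
have := big_addn 0 (a + m) a xpredT (fun i => F (a + (a + m) - i.+1)%N).
rewrite add0n => ->; rewrite addKn big_add1 /=.
apply: eq_bigr => i _; congr F; lia.
Qed.

Lemma sizeL2 : size L = 2.
Proof. by rewrite -opprB size_polyN -polyC1 size_XsubC. Qed.

Lemma wide_sum (W : {poly k}) (G : nat -> {poly k}) n : (size W <= n)%N ->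
  \sum_(i < size W) W`_i *: G i = \sum_(0 <= i < n) W`_i *: G i.
Proof.
move=> sW; rewrite big_mkord (big_ord_widen n (fun i => W`_i *: G i) sW).
rewrite big_mkcond; apply: eq_bigr => i _; case: ifP => // /negbT.
by rewrite -leqNgt => h; rewrite nth_default // scale0r.
Qed.

Lemma taylor (V : {poly k}) n : (size V <= n)%N ->
  V = \sum_(1 <= j < n.+1) (V \Po L)`_(n - j) *: L^+(n - j) /\ (V \Po L)`_0 = V.[1].
Proof.
move=> sV; set W := V \Po L.
have LL : L \Po L = 'X by rewrite comp_polyB comp_polyX rmorph1 opprB addrC subrK.
have HW : V = W \Po L by rewrite /W -comp_polyA LL comp_polyXr.
have sW : (size W <= n)%N by rewrite /W size_comp_poly2 // sizeL2.
split; last by rewrite -horner_coef0 horner_comp !hornerE subr0.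
rewrite {1}HW comp_polyE (wide_sum _ _ _ sW).
by rewrite -{1}[n]add0n revsum.
Qed.

Lemma Urep (U : {poly k}) m q : (size U <= (m + q).+1)%N -> U`_0 = 1 ->
  (forall l, (0 < l <= q)%N -> U`_l = 0) ->
  U = 1 + \sum_(1 <= i < m.+1) U`_((m + q).+1 - i) *: 'X^((m + q).+1 - i).
Proof.
move=> sU U0 Uz.
rewrite -{1}[U]coefK poly_def (wide_sum _ _ _ sU).
rewrite big_ltn // U0 scale1r expr0; congr (_ + _).
rewrite (big_cat_nat _ (n := q.+1)) //=; last by lia.
rewrite big_nat_cond big1 ?add0r; last first.
  by move=> i /andP[/andP[i1 i2] _]; rewrite Uz ?scale0r //; lia.
have -> : ((m + q).+1 = q.+1 + m)%N by lia.
by rewrite revsum.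
Qed.
End PolyPart.
Section KXT.
Variable k : fieldType.
Local Notation L := ((1 - 'X) : {poly k}).
Definition cstm : {rmorphism kt k -> kxt k} := (@tofrac _ \o polyC)%FUN.
Definition kap : {rmorphism k -> kt k} := (@tofrac _ \o polyC)%FUN.
Definition iot : {rmorphism k -> kxt k} := (cstm \o kap)%FUN.
Local Notation x := (xvar k).
Local Notation tau := (cst (tvar k)).

Lemma cstE a : cst a = cstm a. Proof. by []. Qed.
Lemma tvar_neq0 : tvar k != 0.
Proof. by rewrite /tvar tofrac_eq0 polyX_eq0. Qed.
Lemma tau_neq0 : tau != 0.
Proof. by rewrite /cst tofrac_eq0 polyC_eq0 tvar_neq0. Qed.
Lemma x_neq0 : x != 0.
Proof. by rewrite /xvar tofrac_eq0 polyX_eq0. Qed.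
Lemma tmx_neq0 : tau - x != 0.
Proof.
rewrite /cst /xvar -rmorphB tofrac_eq0 -opprB oppr_eq0.
by rewrite polyXsubC_eq0.
Qed.

Definition yv := x / tau.
Lemma ycomm : forall a, GRing.comm yv (iot a).
Proof. by move=> a; rewrite /GRing.comm mulrC. Qed.
Local Notation psi := (horner_morph ycomm).

Lemma tauy : tau * yv = x.
Proof. by rewrite /yv mulrC divfK // tau_neq0. Qed.

Lemma psiX : psi 'X = yv. Proof. exact: horner_morphX. Qed.
Lemma psiC c : psi c%:P = iot c. Proof. exact: horner_morphC. Qed.
Lemma psiZ c p : psi (c *: p) = iot c * psi p.
Proof. by rewrite -mul_polyC rmorphM /= horner_morphC. Qed.


Lemma embxtX (pw n : nat) :
  embxt ('X^pw * (('X : {poly k})%:P - 'X)^+n) = x ^+ pw * (tau - x) ^+ n.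
Proof.
rewrite /embxt rmorphM !rmorphXn rmorphB /= map_polyX map_polyC /=.
by rewrite rmorphM !rmorphXn rmorphB.
Qed.

Lemma embxtP (q : nat) (N : {poly k}) :
  embxt (\sum_(l < q.+1) ((N`_l)%:P * 'X^(q - l))%:P * 'X^l) =
  \sum_(l < q.+1) iot N`_l * tau ^+ (q - l) * x ^+ l.
Proof.
rewrite /embxt rmorph_sum rmorph_sum; apply: eq_bigr => l _ /=.
rewrite rmorphM rmorphXn /= map_polyC map_polyX /= rmorphM rmorphXn /= !rmorphM !rmorphXn /=.
by [].
Qed.

Lemma R1 (q : nat) (N : {poly k}) : (size N <= q.+1)%N ->
  \sum_(l < q.+1) iot N`_l * tau ^+ (q - l) * x ^+ l = tau ^+ q * psi N.
Proof.
move=> sN.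
have sM : (size (map_poly iot N) <= q.+1)%N by rewrite size_map_poly.
rewrite /horner_morph (horner_coef_wide _ sM) mulr_sumr.
apply: eq_bigr => l _; rewrite coef_map /= -tauy exprMn mulrCA mulrA.
have -> : tau ^+ q = tau ^+ l * tau ^+ (q - l) by rewrite -exprD subnKC // -ltnS.
ring.
Qed.

Lemma psiL : psi L = 1 - yv.
Proof. by rewrite rmorphB rmorph1 /= horner_morphX. Qed.

Lemma tauL : tau * psi L = tau - x.
Proof. by rewrite psiL mulrBr mulr1 tauy. Qed.

Lemma psiU (m q : nat) (U : {poly k}) :
  U = 1 + \sum_(1 <= i < m.+1) U`_((m + q).+1 - i) *: 'X^((m + q).+1 - i) ->
  tau ^+ (m + q).+1 * psi U = tau ^+ (m + q).+1 +
    \sum_(1 <= i < m.+1) iot U`_((m + q).+1 - i) * tau ^+ i * x ^+ ((m + q).+1 - i).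
Proof.
move=> HU; rewrite {1}HU rmorphD rmorph1 rmorph_sum mulrDr mulr1 mulr_sumr.
congr (_ + _); apply: eq_big_nat => i /andP[i1 i2].
rewrite /= psiZ rmorphXn /= horner_morphX -tauy [(tau * yv) ^+ _]exprMn.
have -> : tau ^+ (m + q).+1 = tau ^+ i * tau ^+ ((m + q).+1 - i).
  by rewrite -exprD subnKC //; lia.
ring.
Qed.

Lemma psiV (n : nat) (V W : {poly k}) :
  V = \sum_(1 <= j < n.+1) W`_(n - j) *: L^+(n - j) ->
  tau ^+ n * psi V = \sum_(1 <= j < n.+1) iot W`_(n - j) * tau ^+ j * (tau - x) ^+ (n - j).
Proof.
move=> HV; rewrite {1}HV rmorph_sum mulr_sumr.
apply: eq_big_nat => j /andP[j1 j2].
rewrite /= psiZ rmorphXn -tauL [(tau * _) ^+ _]exprMn.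
have -> : tau ^+ n = tau ^+ j * tau ^+ (n - j).
  by rewrite -exprD subnKC //; lia.
ring.
Qed.


Lemma fld1 (F : fieldType) (c a e xi xr y : F) : e != 0 -> xi != 0 ->
  c * a / e / xi * (xi * xr * y) * e = c * a * xr * y.
Proof. by move=> e0 x0; field; rewrite x0 e0. Qed.
Lemma fld2 (F : fieldType) (c e y p : F) : e != 0 -> p != 0 ->
  c / e / p * (p * y) * e = c * y.
Proof. by move=> e0 p0; field; rewrite p0 e0. Qed.
Lemma fld3 (F : fieldType) (c s a e z w X : F) : e != 0 -> s != 0 -> z != 0 ->
  c * s * a / e / (s * z) * (X * (z * w)) * e = c * a * X * w.
Proof. by move=> e0 s0 z0; field; rewrite ?s0 ?z0 ?e0. Qed.

Lemma cstf1 (c : k) i E : cst (kap c * tvar k ^+ i / tvar k ^+ E) = iot c * tau ^+ i / tau ^+ E.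
Proof. by rewrite cstE !rmorphM fmorphV !rmorphXn. Qed.
Lemma cstf2 i E : cst (tvar k ^+ i / tvar k ^+ E) = tau ^+ i / tau ^+ E.
Proof. by rewrite cstE !rmorphM fmorphV !rmorphXn. Qed.
Lemma cstf3 (c : k) i E : cst (kap c * (-1) ^+ i * tvar k ^+ i / tvar k ^+ E) =
  iot c * (-1) ^+ i * tau ^+ i / tau ^+ E.
Proof. by rewrite cstE !rmorphM fmorphV !rmorphXn rmorphN rmorph1. Qed.

Lemma GformE (m n q : nat) (U W : {poly k}) :
  Gform m.+1 n.+1 (m+q).+1
    (fun i => kap U`_((m + q).+1 - i) * tvar k ^+ i / tvar k ^+ (m + n).+1)
    (tvar k ^+ (m+q).+1 / tvar k ^+ (m + n).+1)
    (fun j => kap W`_(n - j) * (-1) ^+ j * tvar k ^+ j / tvar k ^+ (m + n).+1)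
  * (x ^+ (m+q).+1 * (tau - x) ^+ n) * tau ^+ (m + n).+1
  = \sum_(1 <= i < m.+1) iot U`_((m + q).+1 - i) * tau ^+ i * x ^+ ((m + q).+1 - i) * (tau - x) ^+ n
    + tau ^+ (m+q).+1 * (tau - x) ^+ n
    + \sum_(1 <= j < n.+1) iot W`_(n - j) * tau ^+ j * x ^+ (m+q).+1 * (tau - x) ^+ (n - j).
Proof.
have t0 := tau_neq0; have x0 := x_neq0; have tx0 := tmx_neq0.
have tE : tau ^+ (m + n).+1 != 0 := expf_neq0 _ t0.
rewrite /Gform !mulrDl !mulr_suml.
congr (_ + _ + _).
- apply: eq_big_nat => i /andP[i1 i2].
  rewrite /= cstf1.
  have -> : x ^+ (m + q).+1 = x ^+ i * x ^+ ((m + q).+1 - i).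
    by rewrite -exprD subnKC //; lia.
  have xi : x ^+ i != 0 := expf_neq0 _ x0.
  exact: (@fld1 (kxt k) _ _ _ _ _ _ tE xi).
- rewrite cstf2.
  have xi : x ^+ (m + q).+1 != 0 := expf_neq0 _ x0.
  exact: (@fld2 (kxt k) _ _ _ _ tE xi).
- apply: eq_big_nat => j /andP[j1 j2].
  rewrite /= cstf3.
  have -> : x - tau = - (tau - x) by rewrite opprB.
  rewrite [(- (tau - x)) ^+ j]exprNn.
  have -> : (tau - x) ^+ n = (tau - x) ^+ j * (tau - x) ^+ (n - j).
    by rewrite -exprD subnKC //; lia.
  have s0 : (-1) ^+ j != 0 :> kxt k by rewrite signr_eq0.
  have z0 : (tau - x) ^+ j != 0 := expf_neq0 _ tx0.
  exact: (@fld3 (kxt k) _ _ _ _ _ _ _ tE s0 z0).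
Qed.

Lemma assemble (m n q : nat) (U V W N : {poly k}) :
  N = U * L^+n + 'X^((m+q).+1) * V ->
  U = 1 + \sum_(1 <= i < m.+1) U`_((m + q).+1 - i) *: 'X^((m + q).+1 - i) ->
  V = \sum_(1 <= j < n.+1) W`_(n - j) *: L^+(n - j) ->
  (size N <= q.+1)%N ->
  Gform m.+1 n.+1 (m+q).+1
    (fun i => kap U`_((m + q).+1 - i) * tvar k ^+ i / tvar k ^+ (m + n).+1)
    (tvar k ^+ (m+q).+1 / tvar k ^+ (m + n).+1)
    (fun j => kap W`_(n - j) * (-1) ^+ j * tvar k ^+ j / tvar k ^+ (m + n).+1)
  * embxt ('X^((m+q).+1) * (('X : {poly k})%:P - 'X)^+n)
  = embxt (\sum_(l < q.+1) ((N`_l)%:P * 'X^(q - l))%:P * 'X^l).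
Proof.
move=> HN HU HV sN.
have t0 := tau_neq0.
have tE : tau ^+ (m + n).+1 != 0 := expf_neq0 _ t0.
rewrite embxtX embxtP (R1 _ _ sN).
apply: (mulIf tE).
rewrite GformE mulrAC -exprD.
have -> : (q + (m + n).+1 = (m + q).+1 + n)%N by lia.
rewrite exprD {1}HN rmorphD !rmorphM !rmorphXn /= horner_morphX.
rewrite mulrDr.
have -> : tau ^+ (m + q).+1 * tau ^+ n * (psi U * psi L ^+ n) =
  (tau ^+ (m + q).+1 * psi U) * (tau * psi L) ^+ n by rewrite exprMn mulrACA.
have -> : tau ^+ (m + q).+1 * tau ^+ n * (yv ^+ (m + q).+1 * psi V) =
  (tau * yv) ^+ (m + q).+1 * (tau ^+ n * psi V) by rewrite [(tau * yv) ^+ _]exprMn mulrACA.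
have E1 := psiU _ _ _ HU; have E2 := psiV _ _ _ HV.
transitivity ((tau ^+ (m + q).+1 + \sum_(1 <= i < m.+1) iot U`_((m + q).+1 - i) * tau ^+ i * x ^+ ((m + q).+1 - i)) * (tau - x) ^+ n
  + x ^+ (m + q).+1 * \sum_(1 <= j < n.+1) iot W`_(n - j) * tau ^+ j * (tau - x) ^+ (n - j)); last first.
  by congr (_ * _ ^+ _ + _ ^+ _ * _); [exact: (esym E1) | exact: (esym tauL) | exact: (esym tauy) | exact: (esym E2)].
rewrite mulrDl mulr_suml mulr_sumr [_ * _ + \sum_(_ <= _ < _) _]addrC.
congr (_ + _ + _); apply: eq_big_nat => j _; ring.
Qed.
End KXT.

Lemma ffact_ndvd p a b c : prime p -> (b < p)%N -> (c <= b)%N ->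
  ~~ (p %| (a * p + b) ^_ c)%N.
Proof.
move=> pr bp; elim: c => [|c IH] cb.
  by rewrite ffactn0 dvdn1; apply/eqP => p1; move: (prime_gt1 pr); rewrite p1.
rewrite ffactnSr Euclid_dvdM // negb_or IH ?(ltnW cb) //=.
rewrite -addnBA ?(ltnW cb) // dvdn_addr ?dvdn_mull //.
by rewrite gtnNdvd //; lia.
Qed.

Lemma binom_ndvd p a b c : prime p -> (b < p)%N -> (c <= b)%N ->
  ~~ (p %| 'C(a * p + b, c))%N.
Proof.
move=> pr bp cb; apply/negP => H.
have := ffact_ndvd p a b c pr bp cb; rewrite -bin_ffact.
by rewrite dvdn_mulr.
Qed.

Section Spec.
Variable k : fieldType.
Implicit Types P Q : {poly {poly k}}.
Lemma spec0M P Q : spec0 (P * Q) = spec0 P * spec0 Q.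
Proof. rewrite /spec0; change (fun c : {poly k} => c.[0]) with (horner_eval (0:k)). by rewrite rmorphM. Qed.
Lemma spec0B P Q : spec0 (P - Q) = spec0 P - spec0 Q.
Proof. rewrite /spec0; change (fun c : {poly k} => c.[0]) with (horner_eval (0:k)). by rewrite rmorphB. Qed.
Lemma spec0Xn P n : spec0 (P ^+ n) = spec0 P ^+ n.
Proof. rewrite /spec0; change (fun c : {poly k} => c.[0]) with (horner_eval (0:k)). by rewrite rmorphXn. Qed.
Lemma spec0_sum n (F : 'I_n -> {poly {poly k}}) : spec0 (\sum_(i < n) F i) = \sum_(i < n) spec0 (F i).
Proof. rewrite /spec0; change (fun c : {poly k} => c.[0]) with (horner_eval (0:k)). by rewrite rmorph_sum. Qed.
Lemma spec0C (c : {poly k}) : spec0 (c%:P) = (c.[0])%:P.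
Proof.
apply/polyP => i; rewrite /spec0 coef_map_id0 ?horner0 // !coefC.
by case: (i == 0) => //; rewrite horner0.
Qed.
Lemma spec0X : spec0 ('X : {poly {poly k}}) = 'X.
Proof.
apply/polyP => i; rewrite /spec0 coef_map_id0 ?horner0 // !coefX.
by case: (i == 1) => /=; rewrite ?hornerC ?horner0.
Qed.

Lemma spec0Q pw n :
  spec0 ('X^pw * (('X : {poly k})%:P - 'X)^+n) = 'X^pw * (- 'X)^+n.
Proof. by rewrite spec0M !spec0Xn spec0B spec0C spec0X hornerX polyC0 sub0r. Qed.

Lemma spec0P q (N : {poly k}) :
  spec0 (\sum_(l < q.+1) ((N`_l)%:P * 'X^(q - l))%:P * 'X^l) = (N`_q)%:P * 'X^q.
Proof.
rewrite spec0_sum big_ord_recr /= big1 ?add0r.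
  by rewrite spec0M spec0Xn spec0C spec0X hornerM hornerC hornerXn subnn expr0 mulr1.
move=> i _; rewrite spec0M spec0Xn spec0C spec0X hornerM hornerC hornerXn.
by rewrite expr0n subn_eq0 leqNgt ltn_ord /= mulr0 polyC0 mul0r.
Qed.
End Spec.

Lemma fld4 (F : fieldType) (s c e z : F) : e != 0 -> s * s = 1 ->
  (s * c) / e * (e * z * s) = c * z.
Proof.
move=> e0 ss.
have -> : (s * c) / e * (e * z * s) = (s * s) * (c * z) * (e / e) by ring.
by rewrite ss divff // mul1r mulr1.
Qed.

Lemma nz2 (F : fieldType) (a c : F) : a != 0 -> c != 0 -> a / c != 0.
Proof. by move=> a0 c0; rewrite mulf_neq0 // invr_eq0. Qed.
Lemma nz3 (F : fieldType) (a b c : F) : a != 0 -> b != 0 -> c != 0 -> a * b / c != 0.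
Proof. by move=> a0 b0 c0; rewrite !mulf_neq0 // invr_eq0. Qed.
Lemma nz4 (F : fieldType) (a s b c : F) : a != 0 -> s != 0 -> b != 0 -> c != 0 -> a * s * b / c != 0.
Proof. by move=> a0 s0 b0 c0; rewrite !mulf_neq0 // invr_eq0. Qed.
Lemma kap_neq0 (k : fieldType) (c : k) : c != 0 -> kap k c != 0.
Proof. by rewrite fmorph_eq0. Qed.

Lemma coefL (k : fieldType) n l : (((1 - 'X) : {poly k}) ^+ n)`_l = (-1) ^+ l * ('C(n, l))%:R.
Proof.
elim: n l => [|n IH] l.
  rewrite expr0 coefC; case: l => [|l] /=; first by rewrite expr0 bin0 mul1r.
  by rewrite bin0n mulr0.
rewrite exprSr mulrBr mulr1 coefB coefMX IH.
case: l => [|l] /=; first by rewrite !bin0 !expr0 subr0.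
rewrite IH binS natrD mulrDr exprS mulN1r; ring.
Qed.

Lemma altsum (k : fieldType) n q : (0 < n)%N ->
  \sum_(l < q.+1) (-1) ^+ l * ('C(n, l))%:R = (-1) ^+ q * ('C(n.-1, q))%:R :> k.
Proof.
case: n => [//|n] _.
elim: q => [|q IH]; first by rewrite big_ord1 !bin0.
rewrite big_ord_recr /= IH /= [in X in _ + X]binS natrD exprS mulN1r.
ring.
Qed.

Theorem proposition5p5 (k : closedFieldType) (p : nat) (hp : p \in [pchar k])
  (e1 e2 e : nat) (he2 : (0 < e2)%N) (he21 : (e2 <= e1)%N) (he : e = (e1 + e2)%N)
  (hdiv : ~~ (p %| (e - 1) * (e1 - 1) * (e2 - 1))%N)
  (pw : nat) (hpw1 : (p %| pw)%N) (hpw2 : (e1 <= pw)%N)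
  (hpw3 : forall m : nat, (p %| m)%N -> (e1 <= m)%N -> (pw <= m)%N)
  (hfloor : ((e1 - 1) %/ p + (e2 - 1) %/ p < (e - 1) %/ p)%N) :
  exists (a : nat -> kt k) (apw : kt k) (b : nat -> kt k),
    [/\ apw != 0, a (e1 - 1)%N != 0, b (e2 - 1)%N != 0 &
      exists h : kx k,
        specializes_to (Gform e1 e2 pw a apw b) h /\
        exists f : {poly k},
          [/\ f.[0] != 0, (size f <= e)%N &
              h = (f%:F : kx k) / (('X : {poly k})%:F : kx k) ^+ (e - 1)]].
Proof.
have pr : prime p := pcharf_prime hp.
have p0 : (0 < p)%N := prime_gt0 pr.
rewrite !Euclid_dvdM // !negb_or in hdiv.
move: hdiv => /andP[/andP[hde hdm] hdn].
have [m em] : exists m, e1 = m.+1 by exists e1.-1; lia.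
have [n en] : exists n, e2 = n.+1 by exists e2.-1; lia.
subst e1 e2 e.
have -> : (m.+1 + n.+1 - 1 = (m + n).+1)%N by lia.
rewrite !subn1 /= in hde hdm hdn hfloor *.
have m0 : (0 < m)%N by rewrite lt0n; apply: contraNneq hdm => ->; rewrite dvdn0.
have n0 : (0 < n)%N by rewrite lt0n; apply: contraNneq hdn => ->; rewrite dvdn0.
set m1 := (m %/ p)%N; set r1 := (m %% p)%N; set n1 := (n %/ p)%N; set r2 := (n %% p)%N.
have em : m = (m1 * p + r1)%N := divn_eq m p.
have en : n = (n1 * p + r2)%N := divn_eq n p.
have r1p : (r1 < p)%N := ltn_pmod _ p0.
have r2p : (r2 < p)%N := ltn_pmod _ p0.
have r10 : (0 < r1)%N.
  rewrite lt0n; apply: contra hdm => /eqP r0; rewrite em r0 addn0 dvdn_mull //.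
have r20 : (0 < r2)%N.
  rewrite lt0n; apply: contra hdn => /eqP r0; rewrite en r0 addn0 dvdn_mull //.
have eE : (m + n.+1 = (m1 + n1) * p + (r1 + r2).+1)%N.
  rewrite {1}em {1}en mulnDl; lia.
have hr : (p <= r1 + r2)%N.
  move: hfloor; rewrite eE divnMDl // -/m1 -/n1 => h.
  have : (0 < (r1 + r2).+1 %/ p)%N by lia.
  rewrite divn_gt0 // leq_eqVlt => /orP[/eqP hp'|]; last by [].
  by move: hde; rewrite eE -hp' -mulSnr dvdn_mull.
have [c ec] := dvdnP hpw1.
have mlt : (m < m1.+1 * p)%N by rewrite mulSn; lia.
have hpwle : (pw <= m1.+1 * p)%N := hpw3 _ (dvdn_mull _ (dvdnn p)) mlt.
have cgt : (m1 < c)%N.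
  rewrite -(ltn_pmul2r p0); move: hpw2; rewrite ec; lia.
have hpwge : (m1.+1 * p <= pw)%N by rewrite ec leq_mul2r cgt orbT.
set q := (p - r1.+1)%N.
have epw : pw = (m + q).+1.
  have : pw = (m1.+1 * p)%N by apply/eqP; rewrite eqn_leq hpwle hpwge.
  rewrite mulSn /q; lia.
subst pw.
have hC0 : ('C(n, q)%:R : k) != 0.
  by rewrite -(dvdn_pcharf hp) en binom_ndvd // /q; lia.
have hC1 : ('C(n, q.+1)%:R : k) != 0.
  by rewrite -(dvdn_pcharf hp) en binom_ndvd // /q; lia.
have hC2 : ('C(n.-1, q)%:R : k) != 0.
  have -> : n.-1 = (n1 * p + r2.-1)%N by lia.
  by rewrite -(dvdn_pcharf hp) binom_ndvd // /q; lia.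
rewrite epw.
have [U [V [HN sU sV U0 [Uz Uq]]]] := UV_exists k n q m n0 m0.
set N := take_poly q.+1 ((1 - 'X : {poly k}) ^+ n) in HN.
have [HV W0] := taylor k V n sV.
have HU := Urep k U m q sU U0 Uz.
have sN : (size N <= q.+1)%N := size_take_poly _ _.
have Hass := assemble k m n q U V _ N HN HU HV sN.
have N1 : N.[1] = (-1) ^+ q * ('C(n.-1, q))%:R.
  rewrite (horner_coef_wide _ sN) -altsum //; apply: eq_bigr => l _.
  by rewrite expr1n mulr1 coef_take_poly ltn_ord coefL.
have V1 : V.[1] = N.[1].
  by rewrite HN !hornerE subrr expr0n gtn_eqF // mulr0 add0r expr1n mul1r.
have Nq : N`_q = (-1) ^+ q * ('C(n, q))%:R by rewrite coef_take_poly ltnSn coefL.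
have Nq0 : N`_q != 0 by rewrite Nq mulf_neq0 // signr_eq0.
exists (fun i => kap k U`_((m + q).+1 - i) * tvar k ^+ i / tvar k ^+ (m + n).+1),
       (tvar k ^+ (m + q).+1 / tvar k ^+ (m + n).+1),
       (fun j => kap k (V \Po (1 - 'X))`_(n - j) * (-1) ^+ j * tvar k ^+ j / tvar k ^+ (m + n).+1).
have t0 := tvar_neq0 k.
have tE : tvar k ^+ (m + n).+1 != 0 := expf_neq0 _ t0.
have sn0 : forall j, (-1) ^+ j != 0 :> k by move=> j; rewrite signr_eq0.
have sn0' : forall j, (-1) ^+ j != 0 :> kt k by move=> j; rewrite signr_eq0.
split.
- exact: nz2 (expf_neq0 _ t0) tE.
- rewrite /= (_ : ((m + q).+1 - m = q.+1)%N); last by lia.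
  apply: nz3 (expf_neq0 _ t0) tE; apply: kap_neq0.
  by rewrite Uq coefL oppr_eq0 mulf_neq0.
- rewrite /= subnn W0 V1 N1.
  apply: nz4 (sn0' n) (expf_neq0 _ t0) tE; apply: kap_neq0.
  by rewrite mulf_neq0.
exists ((((-1) ^+ n * N`_q)%:P)%:F / (('X : {poly k})%:F) ^+ (m + n).+1).
split; last first.
  exists (((-1) ^+ n * N`_q)%:P); split => //.
  - by rewrite hornerC mulf_neq0 // signr_eq0.
  - by rewrite (leq_trans (size_polyC_leq1 _)).
exists (\sum_(l < q.+1) ((N`_l)%:P * 'X^(q - l))%:P * 'X^l),
       ('X^((m + q).+1) * (('X : {poly k})%:P - 'X)^+n).
split.
- by rewrite spec0Q mulf_neq0 // expf_neq0 // ?oppr_eq0 polyX_eq0.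
- exact: Hass.
rewrite spec0Q spec0P [(- 'X) ^+ n]exprNn.
have -> : 'X^((m + q).+1) * ((-1) ^+ n * 'X^n) =
          'X^((m + n).+1) * 'X^q * (-1) ^+ n :> {poly k}.
  rewrite mulrCA -exprD -exprD (_ : ((m + q).+1 + n = (m + n).+1 + q)%N); last by lia.
  by rewrite mulrC.
rewrite polyCM !rmorphM !rmorphXn /= polyCN polyC1.
have X1 : ('X : {poly k})%:F != 0 :> kx k by rewrite tofrac_eq0 polyX_eq0.
have X0 := expf_neq0 (m + n).+1 X1.
apply: fld4 X0 _.
by rewrite -exprMn -rmorphM mulrNN mulr1 rmorph1 expr1n.
Qed.
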